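(* With the notation of the context, for all fixed frequencies, $$|S^{\rm good}_{kk_2}|\lesssim1,\qquad |S^{\rm good}_{k_1k_3}|\lesssim1,\qquad |S^{\rm bad}_{kk_2}|\lesssim|k+k_2|^{1-\frac\alpha2}+1,\qquad |S^{\rm bad}_{k_1k_3}|\lesssim|k_1+k_3|^{1-\frac\alpha2}+1.$$
   Context: Fix $\alpha\in(1,2)$, dyadic numbers $1\le N_1,N_2,N_3\le N$, a real number $m$ and a constant $C_0>0$. Let $S$ be the set of $(k,k_1,k_2,k_3)\in\mathbb Z^4$ with $k=k_1-k_2+k_3$, $k_2\notin\{k_1,k_3\}$, $\big||k_1|^\alpha-|k_2|^\alpha+|k_3|^\alpha-|k|^\alpha-m\big|\le C_0$, $|k|\le N$ and $|k_j|\le N_j$ for $j=1,2,3$. Let $S_{k_1k_3}=\{(k,k_2):(k,k_1,k_2,k_3)\in S\}$ and $S_{kk_2}=\{(k_1,k_3):(k,k_1,k_2,k_3)\in S\}$. Fix a small absolute constant $c\in(0,1)$ and set $S^{\rm bad}_{k_1k_3}=\{(k,k_2)\in S_{k_1k_3}:|2k-(k_1+k_3)|<c|k_1+k_3|\}$, $S^{\rm good}_{k_1k_3}=S_{k_1k_3}\setminus S^{\rm bad}_{k_1k_3}$, $S^{\rm bad}_{kk_2}=\{(k_1,k_3)\in S_{kk_2}:|2k_1-(k+k_2)|<c|k+k_2|\}$, $S^{\rm good}_{kk_2}=S_{kk_2}\setminus S^{\rm bad}_{kk_2}$. $|A|$ is cardinality. $A\lesssim B$ means $A\le CB$ with $C$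 depending only on $\alpha$, $c$ and $C_0$. *)

(* Defs.v *)
From Stdlib Require Import Reals ZArith List.
Import ListNotations.
Open Scope R_scope.

(* |x|^a for an integer x, with the convention 0^a = 0 (a > 0 throughout). *)
Definition zpow (x : Z) (a : R) : R :=
  if Z.eqb x 0 then 0 else Rpower (IZR (Z.abs x)) a.

Definition dyadic (N : Z) : Prop := exists n : nat, N = (2 ^ Z.of_nat n)%Z.

(* Cardinality bound |A| <= C for an arbitrary set A of integer pairs:
   every duplicate-free list of elements of A has length at most C. *)
Definition card_le (A : Z * Z -> Prop) (C : R) : Prop :=
  forall l : list (Z * Z), NoDup l -> (forall x, In x l -> A x) ->
    INR (length l) <= C.

Definition inS (alpha C0 m : R) (N N1 N2 N3 : Z) (k k1 k2 k3 : Z) : Prop :=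
  k = (k1 - k2 + k3)%Z /\ k2 <> k1 /\ k2 <> k3 /\
  Rabs (zpow k1 alpha - zpow k2 alpha + zpow k3 alpha - zpow k alpha - m) <= C0 /\
  (Z.abs k <= N)%Z /\ (Z.abs k1 <= N1)%Z /\ (Z.abs k2 <= N2)%Z /\ (Z.abs k3 <= N3)%Z.

Definition S_k1k3_bad alpha C0 m N N1 N2 N3 c (k1 k3 : Z) (p : Z * Z) : Prop :=
  let (k, k2) := p in
  inS alpha C0 m N N1 N2 N3 k k1 k2 k3 /\
  Rabs (IZR (2 * k - (k1 + k3))) < c * Rabs (IZR (k1 + k3)).

Definition S_k1k3_good alpha C0 m N N1 N2 N3 c (k1 k3 : Z) (p : Z * Z) : Prop :=
  let (k, k2) := p in
  inS alpha C0 m N N1 N2 N3 k k1 k2 k3 /\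
  ~ (Rabs (IZR (2 * k - (k1 + k3))) < c * Rabs (IZR (k1 + k3))).

Definition S_kk2_bad alpha C0 m N N1 N2 N3 c (k k2 : Z) (p : Z * Z) : Prop :=
  let (k1, k3) := p in
  inS alpha C0 m N N1 N2 N3 k k1 k2 k3 /\
  Rabs (IZR (2 * k1 - (k + k2))) < c * Rabs (IZR (k + k2)).

Definition S_kk2_good alpha C0 m N N1 N2 N3 c (k k2 : Z) (p : Z * Z) : Prop :=
  let (k1, k3) := p in
  inS alpha C0 m N N1 N2 N3 k k1 k2 k3 /\
  ~ (Rabs (IZR (2 * k1 - (k + k2))) < c * Rabs (IZR (k + k2))).

(* Main.v *)
Require Import Defs.
From Stdlib Require Import Reals ZArith List Lra Lia.
Open Scope R_scope.

Lemma exp_le' x y : x <= y -> exp x <= exp y.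
Proof. intros [H|H]. left; apply exp_increasing; auto. subst; lra. Qed.

Lemma ln_le' x y : 0 < x -> x <= y -> ln x <= ln y.
Proof. intros Hx [H|H]. left; apply ln_increasing; auto. subst; lra. Qed.

Lemma rp_pos x g : 0 < Rpower x g.
Proof. unfold Rpower; apply exp_pos. Qed.

Lemma rp_one g : Rpower 1 g = 1.
Proof. unfold Rpower; rewrite ln_1, Rmult_0_r, exp_0; auto. Qed.

Lemma rp_neg_mono a b g : 0 < a <= b -> g <= 0 -> Rpower b g <= Rpower a g.
Proof.
  intros [Ha Hab] Hg; unfold Rpower; apply exp_le'.
  assert (ln a <= ln b) by (apply ln_le'; lra). nra.
Qed.

Lemma rp_succ x g : 0 < x -> Rpower x (g + 1) = Rpower x g * x.
Proof. intros; rewrite Rpower_plus, Rpower_1; auto. Qed.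

Lemma mvt_pow x y g : 0 < y < x ->
  exists xi, y < xi < x /\ Rpower x g - Rpower y g = g * Rpower xi (g - 1) * (x - y).
Proof.
  intros H.
  destruct (MVT_cor2 (fun z => Rpower z g) (fun z => g * Rpower z (g - 1)) y x)
    as [xi [E Hxi]]; [lra| |].
  - intros z Hz; apply derivable_pt_lim_power; lra.
  - exists xi; split; auto.
Qed.

Lemma tlow1 x y g : 0 < y < x -> 1 <= g ->
  Rpower x g - Rpower y g >= g * Rpower y (g - 1) * (x - y).
Proof.
  intros H Hg; destruct (mvt_pow x y g H) as [xi [Hxi E]]; rewrite E.
  assert (Rpower y (g-1) <= Rpower xi (g-1)) by (apply Rle_Rpower_l; lra).
  assert (0 <= g * (Rpower xi (g-1) - Rpower y (g-1)) * (x - y))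
    by (repeat apply Rmult_le_pos; lra). nra.
Qed.

Lemma tup1 x y g : 0 < y < x -> 1 <= g ->
  Rpower x g - Rpower y g <= g * Rpower x (g - 1) * (x - y).
Proof.
  intros H Hg; destruct (mvt_pow x y g H) as [xi [Hxi E]]; rewrite E.
  assert (Rpower xi (g-1) <= Rpower x (g-1)) by (apply Rle_Rpower_l; lra).
  assert (0 <= g * (Rpower x (g-1) - Rpower xi (g-1)) * (x - y))
    by (repeat apply Rmult_le_pos; lra). nra.
Qed.

Lemma tlow2 x y g : 0 < y < x -> 0 <= g <= 1 ->
  Rpower x g - Rpower y g >= g * Rpower x (g - 1) * (x - y).
Proof.
  intros H Hg; destruct (mvt_pow x y g H) as [xi [Hxi E]]; rewrite E.
  assert (Rpower x (g-1) <= Rpower xi (g-1)) by (apply rp_neg_mono; lra).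
  assert (0 <= g * (Rpower xi (g-1) - Rpower x (g-1)) * (x - y))
    by (repeat apply Rmult_le_pos; lra). nra.
Qed.

Lemma rp_ge1 x g : 1 <= x -> 0 <= g -> 1 <= Rpower x g.
Proof. intros; unfold Rpower; rewrite <- exp_0; apply exp_le'.
  assert (0 <= ln x) by (rewrite <- ln_1; apply ln_le'; lra). nra. Qed.
Lemma rp_le1 x g : 0 < x <= 1 -> 0 <= g -> Rpower x g <= 1.
Proof. intros; unfold Rpower; rewrite <- exp_0; apply exp_le'.
  assert (ln x <= 0) by (rewrite <- ln_1; apply ln_le'; lra). nra. Qed.

Definition P (a x : R) := if Req_dec_T x 0 then 0 else Rpower (Rabs x) a.
Definition G a sg t := P a ((sg + t)/2) + P a ((sg - t)/2).

Lemma P_pos a x : 0 < x -> P a x = Rpower x a.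
Proof. intros; unfold P; destruct (Req_dec_T x 0); [lra|]. rewrite Rabs_right; lra. Qed.
Lemma P_0 a : P a 0 = 0.
Proof. unfold P; destruct (Req_dec_T 0 0); lra. Qed.
Lemma P_opp a x : P a (- x) = P a x.
Proof. unfold P; destruct (Req_dec_T (-x) 0), (Req_dec_T x 0); try lra.
  rewrite Rabs_Ropp; auto. Qed.
Lemma P_ge0 a x : 0 <= P a x.
Proof. unfold P; destruct (Req_dec_T x 0); [lra|]. left; apply rp_pos. Qed.
Lemma P_mono a x y : 0 <= a -> Rabs x <= Rabs y -> P a x <= P a y.
Proof.
  intros Ha H. unfold P; destruct (Req_dec_T x 0), (Req_dec_T y 0).
  - lra.
  - left; apply rp_pos.
  - subst. rewrite Rabs_R0 in H. pose proof (Rabs_pos x).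
    destruct (Rcase_abs x); [rewrite Rabs_left in H|rewrite Rabs_right in H]; lra.
  - apply Rle_Rpower_l; auto. split; auto. apply Rabs_pos_lt; auto.
Qed.

Lemma zpow_P z a : zpow z a = P a (IZR z).
Proof.
  unfold zpow, P. destruct (Z.eqb_spec z 0); destruct (Req_dec_T (IZR z) 0).
  - auto.
  - subst; simpl in n; lra.
  - apply eq_IZR in e; contradiction.
  - rewrite abs_IZR; auto.
Qed.

Lemma BE a sg u v : 1 < a <= 2 -> 0 <= u < v -> v < sg ->
  G a sg v - G a sg u >= a * (a - 1) * Rpower sg (a - 1 - 1) * u * ((v - u) / 2).
Proof.
  intros Ha Hu Hv. unfold G.
  set (au := (sg + u)/2). set (av := (sg+v)/2). set (bu := (sg-u)/2). set (bv := (sg-v)/2).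
  assert (0 < bv) by (unfold bv; lra).
  assert (bv < bu) by (unfold bv, bu; lra).
  assert (bu <= au) by (unfold au, bu; lra).
  assert (au < av) by (unfold au, av; lra).
  assert (au <= sg) by (unfold au; lra).
  rewrite !P_pos by lra.
  pose proof (tlow1 av au a ltac:(lra) ltac:(lra)) as h1.
  pose proof (tup1 bu bv a ltac:(lra) ltac:(lra)) as h2.
  assert (h3 : Rpower au (a-1) - Rpower bu (a-1) >= (a-1) * Rpower sg (a-1-1) * u).
  { destruct (Req_dec_T u 0) as [e|ne].
    - subst u. replace au with bu by (unfold au, bu; lra). rewrite Rmult_0_r. lra.
    - assert (0 < u) by (destruct Hu as [[?|?] ?]; [lra|subst; contradiction]).
      pose proof (tlow2 au bu (a-1) ltac:(unfold au, bu; lra) ltac:(lra)) as h.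
      assert (Rpower sg (a-1-1) <= Rpower au (a-1-1)) by (apply rp_neg_mono; lra).
      replace (au - bu) with u in h by (unfold au, bu; lra).
      assert (0 <= (a-1) * (Rpower au (a-1-1) - Rpower sg (a-1-1)) * u)
        by (repeat apply Rmult_le_pos; lra). nra. }
  replace (av - au) with ((v-u)/2) in h1 by (unfold av, au; lra).
  replace (bu - bv) with ((v-u)/2) in h2 by (unfold bu, bv; lra).
  assert (0 <= a * ((v-u)/2) * (Rpower au (a - 1) - Rpower bu (a - 1) - (a-1) * Rpower sg (a-1-1) * u))
    by (repeat apply Rmult_le_pos; lra).
  nra.
Qed.

Definition hh a := Rpower (1/2) (a - 1).
Definition dl a c := (a - 1) * c * hh a / 2.

Lemma hh_bounds a : 1 < a -> 0 < hh a <= 1.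
Proof. intros; unfold hh; split. apply rp_pos. apply rp_le1; lra. Qed.

Lemma caseA a c sg u v : 1 < a <= 2 -> 0 < c < 1 -> 1 <= u < v -> v < sg -> c * sg <= u ->
  G a sg v - G a sg u >= dl a c * (v - u).
Proof.
  intros Ha Hc Hu Hv Hcu.
  pose proof (BE a sg u v Ha ltac:(lra) Hv) as h.
  pose proof (hh_bounds a (proj1 Ha)).
  assert (E : Rpower sg (a-1-1) * sg = Rpower sg (a-1)).
  { rewrite <- rp_succ by lra. f_equal; ring. }
  assert (H1 : 1 <= Rpower sg (a-1)) by (apply rp_ge1; lra).
  pose proof (rp_pos sg (a-1-1)).
  assert (H2 : c <= Rpower sg (a-1-1) * u).
  { assert (Rpower sg (a-1-1) * (c*sg) <= Rpower sg (a-1-1) * u) by (apply Rmult_le_compat_l; lra).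
    nra. }
  unfold dl.
  assert (a * (a-1) * Rpower sg (a-1-1) * u >= (a-1) * c * hh a).
  { assert ((a-1) * c * hh a <= (a-1) * c) by (assert (0 <= (a-1)*c) by nra; nra).
    assert ((a-1) * c <= (a-1) * (Rpower sg (a-1-1) * u)) by (apply Rmult_le_compat_l; lra).
    assert ((a-1) * (Rpower sg (a-1-1) * u) <= a * ((a-1) * (Rpower sg (a-1-1) * u))).
    { assert (0 <= (a-1) * (Rpower sg (a-1-1) * u)) by nra. nra. }
    nra. }
  assert (0 <= (a * (a-1) * Rpower sg (a-1-1) * u - (a-1) * c * hh a) * ((v-u)/2))
    by (apply Rmult_le_pos; lra).
  nra.
Qed.

Lemma caseA' a c sg u : 1 < a <= 2 -> 0 < c < 1 -> 1 <= u < sg ->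
  G a sg sg - G a sg u >= dl a c * (sg - u).
Proof.
  intros Ha Hc Hu. unfold G.
  replace ((sg - sg)/2) with 0 by lra. replace ((sg+sg)/2) with sg by lra.
  set (au := (sg + u)/2). set (bu := (sg-u)/2).
  assert (0 < bu) by (unfold bu; lra). assert (bu <= au) by (unfold bu, au; lra).
  assert (1 <= au) by (unfold au; lra). assert (au < sg) by (unfold au; lra).
  rewrite P_0, !P_pos by lra.
  pose proof (tlow1 sg au a ltac:(lra) ltac:(lra)) as h1.
  replace (sg - au) with bu in h1 by (unfold bu, au; lra).
  assert (h2 : Rpower bu a = Rpower bu (a-1) * bu) by (rewrite <- rp_succ by lra; f_equal; ring).
  assert (h3 : Rpower bu (a-1) <= Rpower au (a-1)) by (apply Rle_Rpower_l; lra).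
  assert (h4 : 1 <= Rpower au (a-1)) by (apply rp_ge1; lra).
  pose proof (hh_bounds a (proj1 Ha)).
  rewrite h2. unfold dl. replace (sg - u) with (2 * bu) by (unfold bu; lra).
  assert (0 <= (Rpower au (a-1) - Rpower bu (a-1)) * bu) by (apply Rmult_le_pos; lra).
  assert (0 <= (a-1) * (Rpower au (a - 1) - 1) * bu) by (repeat apply Rmult_le_pos; lra).
  assert (0 <= (a-1) * (1 - c * hh a) * bu).
  { repeat apply Rmult_le_pos; try lra. assert (c * hh a <= 1 * 1) by (apply Rmult_le_compat; lra). lra. }
  nra.
Qed.

Lemma caseB a c sg u v : 1 < a <= 2 -> 0 < c < 1 -> 0 <= sg <= u -> 1 <= u < v ->
  G a sg v - G a sg u >= dl a c * (v - u).
Proof.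
  intros Ha Hc Hs Hu. unfold G.
  set (au := (sg + u)/2). set (av := (sg+v)/2).
  assert (1/2 <= au) by (unfold au; lra). assert (au < av) by (unfold au, av; lra).
  assert (P a ((sg - u)/2) <= P a ((sg - v)/2)).
  { apply P_mono; [lra|]. rewrite !Rabs_left1 by lra. lra. }
  rewrite !(P_pos a au), !(P_pos a av) by lra.
  pose proof (tlow1 av au a ltac:(lra) ltac:(lra)) as h1.
  replace (av - au) with ((v-u)/2) in h1 by (unfold av, au; lra).
  assert (hh a <= Rpower au (a-1)) by (unfold hh; apply Rle_Rpower_l; lra).
  pose proof (hh_bounds a (proj1 Ha)).
  unfold dl.
  assert (0 <= a * (Rpower au (a-1) - hh a) * ((v-u)/2)) by (repeat apply Rmult_le_pos; lra).
  assert (0 <= (a - (a-1)*c) * hh a * ((v-u)/2)).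
  { repeat apply Rmult_le_pos; try lra. assert ((a-1)*c <= (a-1)*1) by (apply Rmult_le_compat_l; lra). lra. }
  nra.
Qed.

Lemma g0 a c v : 1 < a <= 2 -> 0 < c < 1 -> 1 <= v ->
  G a 0 v - G a 0 0 >= dl a c * (v - 0).
Proof.
  intros Ha Hc Hv. unfold G.
  replace ((0+0)/2) with 0 by lra. replace ((0-0)/2) with 0 by lra.
  replace ((0 - v)/2) with (- ((0+v)/2)) by lra. rewrite P_opp, P_0.
  rewrite P_pos by lra.
  assert (h2 : Rpower ((0+v)/2) a = Rpower ((0+v)/2) (a-1) * ((0+v)/2))
    by (rewrite <- rp_succ by lra; f_equal; ring).
  assert (hh a <= Rpower ((0+v)/2) (a-1)) by (unfold hh; apply Rle_Rpower_l; lra).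
  pose proof (hh_bounds a (proj1 Ha)).
  rewrite h2. unfold dl.
  assert (0 <= (Rpower ((0+v)/2) (a-1) - hh a) * v) by (apply Rmult_le_pos; lra).
  assert (0 <= (1 - (a-1)*c/2) * hh a * v).
  { repeat apply Rmult_le_pos; try lra. assert ((a-1)*c <= 1*1) by (apply Rmult_le_compat; lra). lra. }
  nra.
Qed.

Lemma GE a c sg u v : 1 < a <= 2 -> 0 < c < 1 -> (sg = 0 \/ 1 <= sg) ->
  (u = 0 \/ 1 <= u) -> u < v -> 1 <= v -> c * sg <= u ->
  G a sg v - G a sg u >= dl a c * (v - u).
Proof.
  intros Ha Hc Hs Hu Huv Hv Hcu.
  destruct Hu as [Hu|Hu].
  - subst u. assert (sg = 0) by (destruct Hs; nra). subst sg. apply g0; auto.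
  - destruct (Rlt_or_le v sg).
    + apply (caseA a c); auto; lra.
    + destruct H as [H|H].
      * destruct (Rle_or_lt sg u).
        -- apply caseB; auto. destruct Hs; lra.
        -- pose proof (caseA' a c sg u Ha Hc ltac:(lra)).
           pose proof (caseB a c sg sg v Ha Hc ltac:(lra) ltac:(destruct Hs; lra)).
           nra.
      * subst v. apply caseA'; auto.
Qed.

Lemma FG a s x : P a x + P a (s - x) = G a (Rabs s) (Rabs (2*x - s)).
Proof.
  unfold G. destruct (Rcase_abs s) as [Hs|Hs]; destruct (Rcase_abs (2*x - s)) as [Ht|Ht];
  rewrite ?(Rabs_left s), ?(Rabs_right s), ?(Rabs_left (2*x-s)), ?(Rabs_right (2*x-s)) by lra.
  - replace ((- s + - (2 * x - s)) / 2) with (- x) by lra.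
    replace ((- s - - (2 * x - s)) / 2) with (- (s - x)) by lra. rewrite !P_opp; lra.
  - replace ((- s + (2 * x - s)) / 2) with (- (s - x)) by lra.
    replace ((- s - (2 * x - s)) / 2) with (- x) by lra. rewrite !P_opp; lra.
  - replace ((s + - (2 * x - s)) / 2) with (s - x) by lra.
    replace ((s - - (2 * x - s)) / 2) with x by lra. lra.
  - replace ((s + (2 * x - s)) / 2) with x by lra.
    replace ((s - (2 * x - s)) / 2) with (s - x) by lra. lra.
Qed.

Lemma FGz a s j : zpow j a + zpow (s - j) a =
  G a (IZR (Z.abs s)) (IZR (Z.abs (2 * j - s))).
Proof.
  rewrite !zpow_P, !abs_IZR, minus_IZR, minus_IZR, mult_IZR. apply FG.
Qed.

Lemma natlike z : (0 <= z)%Z -> IZR z = 0 \/ 1 <= IZR z.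
Proof. intros. destruct (Z.eq_dec z 0). left; subst; auto. right; apply IZR_le; lia. Qed.

Lemma good_core a c C0 sg u v : 1 < a <= 2 -> 0 < c < 1 -> (sg = 0 \/ 1 <= sg) ->
  (u = 0 \/ 1 <= u) -> (v = 0 \/ 1 <= v) -> 0 <= u -> c * sg <= u -> c * sg <= v ->
  Rabs (G a sg u - G a sg v) <= 2 * C0 -> Rabs (u - v) <= 2 * C0 / dl a c.
Proof.
  intros Ha Hc Hs Hu Hv Hu0 Hcu Hcv H.
  assert (Hd : 0 < dl a c) by (unfold dl; pose proof (hh_bounds a (proj1 Ha));
    assert (0 < (a-1)*c) by nra; assert (0 < (a-1)*c*hh a) by nra; lra).
  destruct (Rtotal_order u v) as [Hl|[He|Hg]].
  - pose proof (GE a c sg u v Ha Hc Hs Hu Hl ltac:(destruct Hv; lra) Hcu).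
    assert (0 < dl a c * (v - u)) by (apply Rmult_lt_0_compat; lra).
    rewrite Rabs_left by lra. rewrite Rabs_left1 in H by lra.
    apply (Rmult_le_reg_l (dl a c)); auto. field_simplify; try lra.
  - subst; rewrite Rminus_diag, Rabs_R0. apply Rmult_le_pos. pose proof (Rabs_pos (G a sg v - G a sg v)); lra.
    left; apply Rinv_0_lt_compat; auto.
  - pose proof (GE a c sg v u Ha Hc Hs Hv Hg ltac:(destruct Hu; lra) Hcv).
    assert (0 < dl a c * (u - v)) by (apply Rmult_lt_0_compat; lra).
    rewrite Rabs_right by lra. rewrite Rabs_right in H by lra.
    apply (Rmult_le_reg_l (dl a c)); auto. field_simplify; try lra.
Qed.

Definition Kb a C0 := 16 * C0 / (a * (a - 1)) + 1.

Lemma bad_one a C0 sg u v : 1 < a <= 2 -> 0 < C0 -> 0 <= u < v -> v < sg ->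
  G a sg v - G a sg u <= 2 * C0 -> v - u <= Kb a C0 * Rpower sg (1 - a/2).
Proof.
  intros Ha HC Huv Hv H.
  set (m := (u+v)/2).
  pose proof (BE a sg m v Ha ltac:(unfold m; lra) Hv) as h1.
  pose proof (BE a sg u m Ha ltac:(unfold m; lra) ltac:(unfold m; lra)) as h2.
  set (R := Rpower sg (a-1-1)) in *. set (E := Rpower sg (1 - a/2)).
  assert (HR : 0 < R) by apply rp_pos. assert (HE : 0 < E) by apply rp_pos.
  assert (HRE : R * (E * E) = 1).
  { unfold R, E. rewrite <- !Rpower_plus. replace (a - 1 - 1 + (1 - a/2 + (1 - a/2))) with 0 by field.
    apply Rpower_O; lra. }
  assert (Ha1 : 0 < a * (a-1)) by nra.
  assert (h2' : 0 <= a * (a - 1) * R * u * ((m - u) / 2)).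
  { assert (0 <= a*(a-1)*R) by nra. repeat apply Rmult_le_pos; unfold m in *; lra. }
  set (D := v - u).
  assert (Hm : a * (a - 1) * R * m * ((v - m) / 2) >= a * (a-1) * R * (D * D) / 8).
  { assert (0 <= a*(a-1)*R) by nra. unfold m, D.
    assert (0 <= a*(a-1)*R * u * (v - u)) by (repeat apply Rmult_le_pos; lra). nra. }
  assert (Hq : a * (a-1) * R * (D * D) / 8 <= 2 * C0) by lra.
  assert (Hq2 : D * D <= (16 * C0 / (a * (a-1))) * (E * E)).
  { assert (H8 : a * (a-1) * (D * D) <= 16 * C0 * (E * E)).
    { assert (a * (a-1) * R * (D*D) * (E*E) <= 16 * C0 * (E*E)).
      { assert (0 <= E * E) by nra. 
        assert (a * (a-1) * R * (D*D) <= 16 * C0) by lra. nra. }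
      replace (a * (a-1) * R * (D*D) * (E*E)) with (a * (a-1) * (D*D) * (R * (E*E))) in H0 by ring.
      rewrite HRE in H0. lra. }
    apply (Rmult_le_reg_l (a * (a-1))); auto. field_simplify; lra. }
  assert (HK : 16 * C0 / (a * (a-1)) <= Kb a C0 * Kb a C0).
  { unfold Kb. assert (0 <= 16 * C0 / (a * (a-1))) by (apply Rmult_le_pos; [lra| left; apply Rinv_0_lt_compat; lra]). nra. }
  assert (HKp : 0 < Kb a C0).
  { unfold Kb. assert (0 <= 16 * C0 / (a * (a-1))) by (apply Rmult_le_pos; [lra| left; apply Rinv_0_lt_compat; lra]). lra. }
  assert (D * D <= (Kb a C0 * E) * (Kb a C0 * E)).
  { assert (0 <= E*E) by nra. nra. }
  assert (0 <= D) by (unfold D; lra).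
  assert (0 <= Kb a C0 * E) by nra.
  fold D. nra.
Qed.

Lemma bad_core a C0 sg u v : 1 < a <= 2 -> 0 < C0 -> 0 <= u -> 0 <= v -> u < sg -> v < sg ->
  Rabs (G a sg u - G a sg v) <= 2 * C0 -> Rabs (u - v) <= Kb a C0 * Rpower sg (1 - a/2).
Proof.
  intros Ha HC Hu Hv Hus Hvs H.
  destruct (Rtotal_order u v) as [Hl|[He|Hg]].
  - rewrite Rabs_left by lra. assert (G a sg v - G a sg u <= 2 * C0).
    { pose proof (Rle_abs (- (G a sg u - G a sg v))). rewrite Rabs_Ropp in H0. lra. }
    pose proof (bad_one a C0 sg u v Ha HC ltac:(lra) Hvs H0). lra.
  - subst. rewrite Rminus_diag, Rabs_R0. left. apply Rmult_lt_0_compat; [|apply rp_pos].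
    unfold Kb. assert (0 <= 16 * C0 / (a * (a-1))) by (apply Rmult_le_pos; [lra| left; apply Rinv_0_lt_compat; nra]). lra.
  - rewrite Rabs_right by lra. assert (G a sg u - G a sg v <= 2 * C0).
    { pose proof (Rle_abs (G a sg u - G a sg v)). lra. }
    pose proof (bad_one a C0 sg v u Ha HC ltac:(lra) Hus H0). lra.
Qed.

Definition intZ lo n := map (fun i => (lo + Z.of_nat i)%Z) (seq 0 n).
Lemma in_intZ lo n y : (lo <= y < lo + Z.of_nat n)%Z -> In y (intZ lo n).
Proof.
  intros H. unfold intZ. apply in_map_iff. exists (Z.to_nat (y - lo)). split.
  - rewrite Z2Nat.id; lia.
  - apply in_seq. lia.
Qed.
Lemma len_intZ lo n : length (intZ lo n) = n.
Proof. unfold intZ. rewrite length_map, length_seq. auto. Qed.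

Lemma count (A : Z * Z -> Prop) s M : 0 <= M ->
  (forall p, A p -> snd p = (s - fst p)%Z) ->
  (forall p q, A p -> A q ->
     Rabs (IZR (Z.abs (2 * fst p - s)) - IZR (Z.abs (2 * fst q - s))) <= M) ->
  card_le A (4 * M + 6).
Proof.
  intros HM Hs Hpair l Hnd Hin.
  destruct l as [|p0 l'].
  - simpl. lra.
  - set (t0 := Z.abs (2 * fst p0 - s)).
    set (Mz := up M). destruct (archimed M) as [Hup1 Hup2]. fold Mz in Hup1, Hup2.
    assert (HMz : (0 <= Mz)%Z) by (apply le_IZR; simpl; lra).
    set (ys := map (fun p : Z * Z => (2 * fst p - s)%Z) (p0 :: l')).
    set (n := Z.to_nat (2 * Mz + 1)).
    assert (Hnd' : NoDup ys).
    { apply NoDup_map_NoDup_ForallPairs; auto.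
      intros [x1 y1] [x2 y2] H1 H2 E. cbn [fst snd] in E.
      pose proof (Hs _ (Hin _ H1)). pose proof (Hs _ (Hin _ H2)). cbn [fst snd] in *.
      f_equal; lia. }
    assert (Hinc : incl ys (intZ (t0 - Mz) n ++ intZ (- t0 - Mz) n)).
    { intros y Hy. unfold ys in Hy. apply in_map_iff in Hy. destruct Hy as [p [Ey Hp]].
      pose proof (Hpair _ _ (Hin _ Hp) (Hin _ (or_introl eq_refl))) as Hq.
      fold t0 in Hq. rewrite <- minus_IZR, Rabs_Zabs in Hq.
      assert (Hlt : (Z.abs (Z.abs (2 * fst p - s) - t0) < Mz)%Z) by (apply lt_IZR; lra).
      rewrite Ey in Hlt. apply in_or_app.
      unfold n. destruct (Z.abs_spec y) as [[Hy1 Hy2]|[Hy1 Hy2]]; rewrite Hy2 in Hlt.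
      + left. apply in_intZ. rewrite Z2Nat.id by lia. lia.
      + right. apply in_intZ. rewrite Z2Nat.id by lia. lia. }
    pose proof (NoDup_incl_length Hnd' Hinc) as Hlen.
    rewrite length_app, !len_intZ in Hlen. unfold ys in Hlen. rewrite length_map in Hlen.
    apply le_INR in Hlen. rewrite plus_INR in Hlen. unfold n in Hlen.
    rewrite !(INR_IZR_INZ (Z.to_nat (2 * Mz + 1))), Z2Nat.id in Hlen by lia. rewrite plus_IZR, mult_IZR in Hlen.
    simpl in Hlen |- *. lra.
Qed.

Lemma card_mono A C1 C2 : card_le A C1 -> C1 <= C2 -> card_le A C2.
Proof. intros H Hc l Hn Hi. specialize (H l Hn Hi). lra. Qed.

Lemma abs2 x y z C : Rabs (x - z) <= C -> Rabs (y - z) <= C -> Rabs (x - y) <= 2 * C.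
Proof.
  intros H1 H2. unfold Rabs in *.
  destruct (Rcase_abs (x - z)), (Rcase_abs (y - z)), (Rcase_abs (x - y)); lra.
Qed.

Lemma goodZ a c C0 s j j' : 1 < a <= 2 -> 0 < c < 1 ->
  ~ (Rabs (IZR (2 * j - s)) < c * Rabs (IZR s)) ->
  ~ (Rabs (IZR (2 * j' - s)) < c * Rabs (IZR s)) ->
  Rabs ((zpow j a + zpow (s - j) a) - (zpow j' a + zpow (s - j') a)) <= 2 * C0 ->
  Rabs (IZR (Z.abs (2 * j - s)) - IZR (Z.abs (2 * j' - s))) <= 2 * C0 / dl a c.
Proof.
  intros Ha Hc H1 H2 H. rewrite !FGz in H. rewrite !Rabs_Zabs in H1, H2.
  apply (good_core a c C0 (IZR (Z.abs s))); auto; try (apply natlike; lia); try lra.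
  apply IZR_le; lia.
Qed.

Lemma badZ a c C0 s j j' : 1 < a <= 2 -> 0 < c < 1 -> 0 < C0 ->
  Rabs (IZR (2 * j - s)) < c * Rabs (IZR s) ->
  Rabs (IZR (2 * j' - s)) < c * Rabs (IZR s) ->
  Rabs ((zpow j a + zpow (s - j) a) - (zpow j' a + zpow (s - j') a)) <= 2 * C0 ->
  Rabs (IZR (Z.abs (2 * j - s)) - IZR (Z.abs (2 * j' - s))) <= Kb a C0 * zpow s (1 - a/2).
Proof.
  intros Ha Hc HC H1 H2 H. rewrite !FGz in H. rewrite !Rabs_Zabs in H1, H2.
  assert (0 <= IZR (Z.abs (2 * j - s))) by (apply IZR_le; lia).
  assert (0 <= IZR (Z.abs (2 * j' - s))) by (apply IZR_le; lia).
  assert (0 < IZR (Z.abs s)) by nra.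
  assert (Hz : zpow s (1 - a/2) = Rpower (IZR (Z.abs s)) (1 - a/2)).
  { unfold zpow. destruct (Z.eqb_spec s 0); auto. subst; simpl in *; lra. }
  rewrite Hz. apply (bad_core a C0 (IZR (Z.abs s))); auto; nra.
Qed.

Lemma dl_pos a c : 1 < a <= 2 -> 0 < c < 1 -> 0 < dl a c.
Proof. intros. unfold dl; pose proof (hh_bounds a (proj1 H)).
  assert (0 < (a-1)*c) by nra; assert (0 < (a-1)*c*hh a) by nra; lra. Qed.
Lemma Kb_pos a C0 : 1 < a -> 0 < C0 -> 0 < Kb a C0.
Proof. intros. unfold Kb. assert (0 <= 16 * C0 / (a * (a-1)))
  by (apply Rmult_le_pos; [lra| left; apply Rinv_0_lt_compat; nra]). lra. Qed.
Lemma zpow_ge0 z g : 0 <= zpow z g.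
Proof. unfold zpow. destruct (z =? 0)%Z. lra. left; apply rp_pos. Qed.

Theorem lemma2p7 (alpha c C0 : R)
  (halpha : 1 < alpha < 2) (hc : 0 < c < 1) (hC0 : 0 < C0) :
  exists C : R, 0 < C /\
  forall (N N1 N2 N3 : Z) (m : R),
    dyadic N -> dyadic N1 -> dyadic N2 -> dyadic N3 ->
    (1 <= N1 <= N)%Z -> (1 <= N2 <= N)%Z -> (1 <= N3 <= N)%Z ->
    (forall k k2 : Z,
       card_le (S_kk2_good alpha C0 m N N1 N2 N3 c k k2) C /\
       card_le (S_kk2_bad alpha C0 m N N1 N2 N3 c k k2)
         (C * (zpow (k + k2) (1 - alpha / 2) + 1))) /\
    (forall k1 k3 : Z,
       card_le (S_k1k3_good alpha C0 m N N1 N2 N3 c k1 k3) C /\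
       card_le (S_k1k3_bad alpha C0 m N N1 N2 N3 c k1 k3)
         (C * (zpow (k1 + k3) (1 - alpha / 2) + 1))).
Proof.
  assert (Ha : 1 < alpha <= 2) by lra.
  pose proof (dl_pos alpha c Ha hc) as Hd. pose proof (Kb_pos alpha C0 (proj1 Ha) hC0) as HK.
  assert (HM : 0 <= 2 * C0 / dl alpha c) by (apply Rmult_le_pos; [lra|left; apply Rinv_0_lt_compat; lra]).
  exists (4 * (2 * C0 / dl alpha c) + 4 * Kb alpha C0 + 6). split; [lra|].
  intros N N1 N2 N3 m _ _ _ _ _ _ _. split; intros x y; split.
  - eapply card_mono; [apply (count _ (x + y) (2 * C0 / dl alpha c)); auto| lra].
    + intros [k1 k3] [[Hk _] _]; cbn [fst snd]; lia.
    + intros [k1 k3] [k1' k3'] [[Hk [_ [_ [H1 _]]]] Hg] [[Hk' [_ [_ [H1' _]]]] Hg'].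
      cbn [fst snd].
      assert (E : k3 = (x + y - k1)%Z) by lia. assert (E' : k3' = (x + y - k1')%Z) by lia.
      subst k3 k3'. apply (goodZ alpha c C0); auto.
      apply (abs2 _ _ (zpow y alpha + zpow x alpha + m)).
      * replace (zpow k1 alpha + zpow (x + y - k1) alpha - (zpow y alpha + zpow x alpha + m))
          with (zpow k1 alpha - zpow y alpha + zpow (x + y - k1) alpha - zpow x alpha - m) by ring. auto.
      * replace (zpow k1' alpha + zpow (x + y - k1') alpha - (zpow y alpha + zpow x alpha + m))
          with (zpow k1' alpha - zpow y alpha + zpow (x + y - k1') alpha - zpow x alpha - m) by ring. auto.
  - eapply card_mono; [apply (count _ (x + y) (Kb alpha C0 * zpow (x + y) (1 - alpha/2))); auto|].
    + pose proof (zpow_ge0 (x+y) (1 - alpha/2)). nra.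
    + intros [k1 k3] [[Hk _] _]; cbn [fst snd]; lia.
    + intros [k1 k3] [k1' k3'] [[Hk [_ [_ [H1 _]]]] Hg] [[Hk' [_ [_ [H1' _]]]] Hg'].
      cbn [fst snd].
      assert (E : k3 = (x + y - k1)%Z) by lia. assert (E' : k3' = (x + y - k1')%Z) by lia.
      subst k3 k3'. apply (badZ alpha c C0); auto.
      apply (abs2 _ _ (zpow y alpha + zpow x alpha + m)).
      * replace (zpow k1 alpha + zpow (x + y - k1) alpha - (zpow y alpha + zpow x alpha + m))
          with (zpow k1 alpha - zpow y alpha + zpow (x + y - k1) alpha - zpow x alpha - m) by ring. auto.
      * replace (zpow k1' alpha + zpow (x + y - k1') alpha - (zpow y alpha + zpow x alpha + m))
          with (zpow k1' alpha - zpow y alpha + zpow (x + y - k1') alpha - zpow x alpha - m) by ring. auto.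
    + pose proof (zpow_ge0 (x+y) (1 - alpha/2)).
      assert (4 * Kb alpha C0 * zpow (x + y) (1 - alpha/2) <=
              (4 * (2 * C0 / dl alpha c) + 4 * Kb alpha C0 + 6) * zpow (x + y) (1 - alpha/2)).
      { apply Rmult_le_compat_r; lra. }
      nra.
  - eapply card_mono; [apply (count _ (x + y) (2 * C0 / dl alpha c)); auto| lra].
    + intros [k k2] [[Hk _] _]; cbn [fst snd]; lia.
    + intros [k k2] [k' k2'] [[Hk [_ [_ [H1 _]]]] Hg] [[Hk' [_ [_ [H1' _]]]] Hg'].
      cbn [fst snd].
      assert (E : k2 = (x + y - k)%Z) by lia. assert (E' : k2' = (x + y - k')%Z) by lia.
      subst k2 k2'. apply (goodZ alpha c C0); auto.
      apply (abs2 _ _ (zpow x alpha + zpow y alpha - m)).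
      * rewrite Rabs_minus_sym.
        replace (zpow x alpha + zpow y alpha - m - (zpow k alpha + zpow (x + y - k) alpha))
          with (zpow x alpha - zpow (x + y - k) alpha + zpow y alpha - zpow k alpha - m) by ring. auto.
      * rewrite Rabs_minus_sym.
        replace (zpow x alpha + zpow y alpha - m - (zpow k' alpha + zpow (x + y - k') alpha))
          with (zpow x alpha - zpow (x + y - k') alpha + zpow y alpha - zpow k' alpha - m) by ring. auto.
  - eapply card_mono; [apply (count _ (x + y) (Kb alpha C0 * zpow (x + y) (1 - alpha/2))); auto|].
    + pose proof (zpow_ge0 (x+y) (1 - alpha/2)). nra.
    + intros [k k2] [[Hk _] _]; cbn [fst snd]; lia.
    + intros [k k2] [k' k2'] [[Hk [_ [_ [H1 _]]]] Hg] [[Hk' [_ [_ [H1' _]]]] Hg'].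
      cbn [fst snd].
      assert (E : k2 = (x + y - k)%Z) by lia. assert (E' : k2' = (x + y - k')%Z) by lia.
      subst k2 k2'. apply (badZ alpha c C0); auto.
      apply (abs2 _ _ (zpow x alpha + zpow y alpha - m)).
      * rewrite Rabs_minus_sym.
        replace (zpow x alpha + zpow y alpha - m - (zpow k alpha + zpow (x + y - k) alpha))
          with (zpow x alpha - zpow (x + y - k) alpha + zpow y alpha - zpow k alpha - m) by ring. auto.
      * rewrite Rabs_minus_sym.
        replace (zpow x alpha + zpow y alpha - m - (zpow k' alpha + zpow (x + y - k') alpha))
          with (zpow x alpha - zpow (x + y - k') alpha + zpow y alpha - zpow k' alpha - m) by ring. auto.
    + pose proof (zpow_ge0 (x+y) (1 - alpha/2)).
      assert (4 * Kb alpha C0 * zpow (x + y) (1 - alpha/2) <=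
              (4 * (2 * C0 / dl alpha c) + 4 * Kb alpha C0 + 6) * zpow (x + y) (1 - alpha/2)).
      { apply Rmult_le_compat_r; lra. }
      nra.
Qed.
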